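(* For every commutative $n$-cube $D:\{0\to1\}^n\to\Delta_+$, the assignment $v\mapsto H_{comb}(c_v)$ together with the maps $H_{comb}(c_w)\to H_{comb}(c_v)$ described below forms a commutative diagram, i.e. a functor $H_{comb}(D):N(P_n)\to\mathrm{sSet}^{op}$ (an $n$-cube of correspondences in $\mathrm{sSet}^{op}$).
   Context: $\Delta_+$ is the category of finite linear orders and monotone maps. For $X\in\Delta_+$, $\langle X\rangle$ is the simplicial set represented by the ordered set $\mathrm{Hom}(X,\{0<1\})$ (pointwise order). For an interval $X$ of a linear order $Y$, $i_!:\langle X\rangle\to\langle Y\rangle$ extends $\varphi$ by $0$ below $X$ and $1$ above $X$. For monotone $\alpha:X\to Y$, $H_{comb}(\alpha)\subseteq\langle X\rangle$ is the simplicial subset given by the union of the images of $i_!:\langle\alpha^{-1}(y)\rangle\to\langle X\rangle$, $y\in Y$. For $X\xrightarrow{f}Y\xrightarrow{g}Z$ with $\alpha=gf$: the map $H_{comb}(f)\to H_{comb}(\alpha)$ is the inclusion inside $\langle X\rangle$ (each fiber of $f$ is a subinterval of a fiber of $\alpha$), and $H_{comb}(g)\to H_{comb}(\alpha)$ is, on each $\langle g^{-1}(z)\rangle$, the map $\langle g^{-1}(z)\rangle\to\langle\alpha^{-1}(z)\rangle$ induced by $f|:\alpha^{-1}(z)\to g^{-1}(z)$. $P_n$ is the poset of faces $v\in\{-,0,+\}^n$ of the $n$-cube, $v\to w$ iff $w$ is a subface of $v$ (i.e. $v_i=\pm\Rightarrow w_i=v_i$); face $v$ consists of vertices $\varepsilon$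 with $\varepsilon_i=0$ where $v_i=-$ and $\varepsilon_i=1$ where $v_i=+$. $c_v$ is the composite map in $D$ from the initial vertex of face $v$ to its terminal vertex. For $w$ a subface of $v$, write $c_v=h\circ c_w\circ f$ with $f$ from the initial vertex of $v$ to that of $w$ and $h$ from the terminal vertex of $w$ to that of $v$; the map $H_{comb}(c_w)\to H_{comb}(c_v)$ is the composite $H_{comb}(c_w)\to H_{comb}(h c_w)\to H_{comb}(hc_wf)$ of the two kinds of maps above. *)

(* Defs.v *)
From HB Require Import structures.
From mathcomp Require Import all_boot.
From Stdlib Require Import ClassicalEpsilon.

Set Implicit Arguments.
Unset Strict Implicit.
Unset Printing Implicit Defensive.

(* Delta_+ : the object with m elements is the linear order 'I_m
   (m = 0 is the empty order); morphisms are monotone maps.                *)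
Definition monotone (m n : nat) (f : 'I_m -> 'I_n) : Prop :=
  forall i j : 'I_m, i <= j -> f i <= f j.

(* Hom(T, {0<1}) for an ordered type (T, le): monotone maps to bool.
   Pointwise order: phi <= psi iff forall x, phi x -> psi x.               *)
Definition monob (T : Type) (le : T -> T -> bool) (phi : T -> bool) : Prop :=
  forall x y, le x y -> phi x -> phi y.

(* k-simplices of <T> = nerve of the poset Hom(T,{0<1}):
   monotone maps [k] = 'I_k.+1 -> Hom(T,{0<1}).                            *)
Definition is_simplex (T : Type) (le : T -> T -> bool) (k : nat)
    (s : 'I_k.+1 -> T -> bool) : Prop :=
  (forall j, monob le (s j)) /\
  (forall j j' : 'I_k.+1, j <= j' -> forall x, s j x -> s j' x).

(* the fiber a^{-1}(z) of a : 'I_m -> 'I_p, an interval of 'I_m when a is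
   monotone, with the order induced from 'I_m *)
Definition fiber (m p : nat) (a : 'I_m -> 'I_p) (z : 'I_p) : Type :=
  {x : 'I_m | a x == z}.

Definition fiber_le (m p : nat) (a : 'I_m -> 'I_p) (z : 'I_p)
  (x y : fiber a z) : bool := val x <= val y.

(* i_! : <a^{-1}(z)> -> <'I_m> on vertices: extend psi by 0 below the
   interval a^{-1}(z) and by 1 above it. *)
Definition ext_fib (m p : nat) (a : 'I_m -> 'I_p) (z : 'I_p)
    (psi : fiber a z -> bool) : 'I_m -> bool :=
  fun y => match (insub y : option {x : 'I_m | a x == z}) with
           | Some s => psi s
           | None => z < a y
           end.

Definition in_piece (m p : nat) (a : 'I_m -> 'I_p) (k : nat)
    (s : 'I_k.+1 -> 'I_m -> bool) (z : 'I_p) (t : 'I_k.+1 -> fiber a z -> bool)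
    : Prop :=
  is_simplex (@fiber_le m p a z) t /\ forall j, s j = ext_fib (t j).

Definition Hcomb (m p : nat) (a : 'I_m -> 'I_p) (k : nat)
    (s : 'I_k.+1 -> 'I_m -> bool) : Prop :=
  exists z t, @in_piece m p a k s z t.

(* For X --f--> Y --g--> Z with alpha = g f:                               *)

(* (1) H_comb(f) -> H_comb(alpha): the inclusion inside <X>. *)
Definition Hincl (m k : nat) (s : 'I_k.+1 -> 'I_m -> bool) := s.

Definition frestr (m q p : nat) (f : 'I_m -> 'I_q) (g : 'I_q -> 'I_p)
    (z : 'I_p) (x : fiber (fun x => g (f x)) z) : fiber g z :=
  exist (fun y => g y == z) (f (val x)) (valP x).

(* (2) H_comb(g) -> H_comb(alpha): on the piece <g^{-1}(z)> it is the map
   <g^{-1}(z)> -> <alpha^{-1}(z)> induced by f| (followed by i_!).  Outside H_comb(g) the value is an irrelevant default. *)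
Definition Hpush (m q p : nat) (f : 'I_m -> 'I_q) (g : 'I_q -> 'I_p)
    (k : nat) (s : 'I_k.+1 -> 'I_q -> bool) : 'I_k.+1 -> 'I_m -> bool :=
  match excluded_middle_informative
          (exists zt : {z : 'I_p & 'I_k.+1 -> fiber g z -> bool},
              in_piece s (projT2 zt)) with
  | left H =>
      let zt := proj1_sig (constructive_indefinite_description _ H) in
      fun j => @ext_fib m p (fun x => g (f x)) (projT1 zt)
                 (fun x => projT2 zt j (frestr x))
  | right _ => fun j x => s j (f x)
  end.

(* Commutative n-cubes D : {0->1}^n -> Delta_+.  Vertices are
   e : {ffun 'I_n -> bool}; ob e is the size of the linear order D(e);
   mor e e' is D(e <= e') (only meaningful when e <= e').                  *)
Definition leV (n : nat) (e e' : {ffun 'I_n -> bool}) : Prop :=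
  forall i, e i -> e' i.

Definition is_cube (n : nat) (ob : {ffun 'I_n -> bool} -> nat)
    (mor : forall e e' : {ffun 'I_n -> bool}, 'I_(ob e) -> 'I_(ob e')) : Prop :=
  (forall e e', leV e e' -> monotone (mor e e')) /\
  (forall e (x : 'I_(ob e)), mor e e x = x) /\
  (forall e e' e'', leV e e' -> leV e' e'' ->
     forall x : 'I_(ob e), mor e' e'' (mor e e' x) = mor e e'' x).

(* Faces of the n-cube: v : {ffun 'I_n -> option bool}, with
   Some false = '-', None = '0', Some true = '+'. *)
Definition face_init (n : nat) (v : {ffun 'I_n -> option bool})
  : {ffun 'I_n -> bool} := [ffun i => v i == Some true].
Definition face_term (n : nat) (v : {ffun 'I_n -> option bool})
  : {ffun 'I_n -> bool} := [ffun i => v i != Some false].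

(* v -> w in P_n iff w is a subface of v *)
Definition subface (n : nat) (w v : {ffun 'I_n -> option bool}) : Prop :=
  forall i, v i != None -> w i = v i.

Definition cmap (n : nat) (ob : {ffun 'I_n -> bool} -> nat)
    (mor : forall e e' : {ffun 'I_n -> bool}, 'I_(ob e) -> 'I_(ob e'))
    (v : {ffun 'I_n -> option bool}) :
    'I_(ob (face_init v)) -> 'I_(ob (face_term v)) :=
  mor (face_init v) (face_term v).
Arguments cmap {n ob} mor v _.

(* The map H_comb(c_w) -> H_comb(c_v) for w a subface of v, with
   c_v = h c_w f:  H_comb(c_w) -> H_comb(h c_w) -> H_comb(h c_w f). *)
Definition Hmap (n : nat) (ob : {ffun 'I_n -> bool} -> nat)
    (mor : forall e e' : {ffun 'I_n -> bool}, 'I_(ob e) -> 'I_(ob e'))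
    (w v : {ffun 'I_n -> option bool}) (k : nat)
    (s : 'I_k.+1 -> 'I_(ob (face_init w)) -> bool)
    : 'I_k.+1 -> 'I_(ob (face_init v)) -> bool :=
  let f := mor (face_init v) (face_init w) in
  let h := mor (face_term w) (face_term v) in
  Hpush f (fun y => h (cmap mor w y)) (Hincl s).
Arguments Hmap {n ob} mor w v {k} s _ _.

(* Main.v *)
Require Import Defs.
From HB Require Import structures.
From mathcomp Require Import all_boot.
From Stdlib Require Import FunctionalExtensionality ClassicalEpsilon.
Set Implicit Arguments.
Unset Strict Implicit.

Lemma Hpush_eq (m q p : nat) (f : 'I_m -> 'I_q) (g : 'I_q -> 'I_p) k
  (s : 'I_k.+1 -> 'I_q -> bool) : Hpush f g s = fun j x => s j (f x).
Proof.
rewrite /Hpush; case: excluded_middle_informative => H //.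
move: (proj2_sig (constructive_indefinite_description _ H)).
case: (proj1_sig _) => z t /= [_ Hs].
apply: functional_extensionality => j; apply: functional_extensionality => y.
rewrite Hs /ext_fib.
case: insubP => [u Hu Eu|Hn]; case: insubP => [u' Hu' Eu'|Hn'] //=.
- congr (t j _); apply: val_inj; rewrite /= Eu Eu' //.
- by rewrite Hu in Hn'.
- by rewrite Hu' in Hn.
Qed.

From mathcomp Require Import zify.

Lemma ext_mono (m p : nat) (a : 'I_m -> 'I_p) (z : 'I_p) psi :
  monotone a -> monob (@fiber_le m p a z) psi ->
  forall x y : 'I_m, x <= y -> ext_fib psi x -> ext_fib psi y.
Proof.
move=> Ha Hpsi x y Lxy; have := Ha _ _ Lxy.
rewrite /ext_fib; case: insubP => [u Hu Eu|Hn]; case: insubP => [u' Hu' Eu'|Hn'] /=.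
- move=> _; apply: Hpsi; rewrite /fiber_le Eu Eu' //.
- move=> L _; move: Hu Hn'; rewrite -!val_eqE /=; lia.
- move=> L; move: Hu' Hn; rewrite -!val_eqE /=; lia.
- move=> L; lia.
Qed.

Lemma ext_pt (m p : nat) (a : 'I_m -> 'I_p) (z : 'I_p) (psi psi' : fiber a z -> bool) x :
  (forall x', psi x' -> psi' x') -> ext_fib psi x -> ext_fib psi' x.
Proof. by rewrite /ext_fib; case: insubP => [u _ _|_] //= H; apply: H. Qed.

Lemma Hcomb_push (m q p r : nat) (f : 'I_m -> 'I_q) (a : 'I_q -> 'I_p)
  (h : 'I_p -> 'I_r) (c : 'I_m -> 'I_r) k (s : 'I_k.+1 -> 'I_q -> bool) :
  monotone f -> monotone a -> monotone h -> (forall x, c x = h (a (f x))) ->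
  Hcomb a s -> Hcomb c (fun j x => s j (f x)).
Proof.
move=> Hf Ha Hh Hc [z [t [[Tm Tj] Hs]]].
exists (h z), (fun j (y : fiber c (h z)) => s j (f (val y))).
split; first split.
- move=> j x y; rewrite /fiber_le => Lxy; rewrite Hs.
  exact: (ext_mono Ha (Tm j) (Hf _ _ Lxy)).
- move=> j j' Ljj' x; rewrite !Hs; apply: ext_pt; exact: Tj.
- move=> j; apply: functional_extensionality => y.
  rewrite /ext_fib; case: insubP => [u Hu Eu | Hn] /=; first by rewrite Eu.
  rewrite Hs /ext_fib; case: insubP => [u Hu Eu|Hn'] /=.
  + by move: Hn; rewrite Hc (eqP Hu) eqxx.
  + rewrite Hc; move: Hn; rewrite Hc => Hn.
    case: (ltngtP z (a (f y))) => L.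
    * have := Hh _ _ (ltnW L); move: Hn; rewrite -val_eqE /=; lia.
    * have := Hh _ _ (ltnW L); lia.
    * by move: Hn'; rewrite -val_eqE /= L eqxx.
Qed.

Lemma Hmap_eq (n : nat) (ob : {ffun 'I_n -> bool} -> nat)
    (mor : forall e e' : {ffun 'I_n -> bool}, 'I_(ob e) -> 'I_(ob e')) w v k
    (s : 'I_k.+1 -> 'I_(ob (face_init w)) -> bool) :
  Hmap mor w v s = fun j x => s j (mor (face_init v) (face_init w) x).
Proof. by rewrite /Hmap Hpush_eq. Qed.

Lemma sub_init n (w v : {ffun 'I_n -> option bool}) :
  subface w v -> leV (face_init v) (face_init w).
Proof.
move=> H i; rewrite !ffunE => /eqP E; apply/eqP; rewrite H ?E //.
Qed.

Lemma sub_term n (w v : {ffun 'I_n -> option bool}) :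
  subface w v -> leV (face_term w) (face_term v).
Proof.
move=> H i; rewrite !ffunE; case E: (v i) => [b|] //.
by rewrite H ?E.
Qed.

Lemma init_term n (w : {ffun 'I_n -> option bool}) :
  leV (face_init w) (face_term w).
Proof. by move=> i; rewrite !ffunE => /eqP ->. Qed.

Theorem proposition4p7 (n : nat) (ob : {ffun 'I_n -> bool} -> nat)
    (mor : forall e e' : {ffun 'I_n -> bool}, 'I_(ob e) -> 'I_(ob e'))
    (HD : is_cube mor) :
  (* each map H_comb(c_w) -> H_comb(c_v) is well defined ... *)
  (forall w v, subface w v -> forall k (s : 'I_k.+1 -> 'I_(ob (face_init w)) -> bool),
     Hcomb (cmap mor w) s -> Hcomb (cmap mor v) (Hmap mor w v s)) /\
  (* ... and simplicial (commutes with all simplicial operators) *)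
  (forall w v, subface w v -> forall k l (th : 'I_l.+1 -> 'I_k.+1), monotone th ->
     forall s : 'I_k.+1 -> 'I_(ob (face_init w)) -> bool,
     Hcomb (cmap mor w) s ->
     Hmap mor w v (fun j => s (th j)) = (fun j => Hmap mor w v s (th j))) /\
  (* identities *)
  (forall v k (s : 'I_k.+1 -> 'I_(ob (face_init v)) -> bool),
     Hcomb (cmap mor v) s -> Hmap mor v v s = s) /\
  (* composition: u subface of w subface of v *)
  (forall u w v, subface u w -> subface w v ->
     forall k (s : 'I_k.+1 -> 'I_(ob (face_init u)) -> bool),
     Hcomb (cmap mor u) s -> Hmap mor w v (Hmap mor u w s) = Hmap mor u v s).
Proof.
case: HD => [Hm [Hid Hcomp]].
split; last split; last split.
- move=> w v Hwv k s Hs; rewrite Hmap_eq.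
  apply: (Hcomb_push (h := mor (face_term w) (face_term v))) Hs.
  + apply: Hm; exact: (sub_init Hwv).
  + by rewrite /cmap; apply: Hm; exact: init_term.
  + apply: Hm; exact: (sub_term Hwv).
  + have h1 := @init_term _ w; have h2 := sub_term Hwv; have h3 := sub_init Hwv.
    have h4 : leV (face_init w) (face_term v) by move=> i /h1 /h2.
    by move=> x; rewrite /cmap !Hcomp.
- by move=> w v _ k l th _ s _; rewrite !Hmap_eq.
- move=> v k s _; rewrite Hmap_eq.
  by apply: functional_extensionality => j; apply: functional_extensionality => x; rewrite Hid.
- move=> u w v Huw Hwv k s _; rewrite !Hmap_eq.
  apply: functional_extensionality => j; apply: functional_extensionality => x.
  by rewrite Hcomp //; [exact: sub_init | exact: sub_init].
Qed.
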